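(* Let $A=(a,ha-d,ha+d)$ with $d,h\in\mathbb{P}$, $\gcd(a,d)=1$, $ha-d>1$, and $r_1=\lfloor\frac{ha-d}{2h}\rfloor$. Then $$\sum_{r=0}^{a-1}x^{N_r}=\frac{1-x^{(ha+d)(r_1+1)}}{1-x^{ha+d}}+\frac{x^{ha-d}\big(1-x^{(ha-d)(a-r_1-1)}\big)}{1-x^{ha-d}}.$$
   Context: For $A=(a,c_1,\dots,c_m)$ of positive integers with $\gcd(A)=1$ and $0\le r\le a-1$, $N_r$ is the least nonnegative integer $a_0\equiv r\pmod a$ that can be written as $\sum_{i=1}^m c_ix_i$ with all $x_i$ nonnegative integers. $\mathbb{P}=\{1,2,\dots\}$. *)

(* Defs.v *)
From HB Require Import structures.
From mathcomp Require Import all_boot all_order all_algebra.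
From Stdlib Require Import ClassicalEpsilon.
Set Implicit Arguments. Unset Strict Implicit. Unset Printing Implicit Defensive.
Import Order.TTheory GRing.Theory Num.Theory.

Definition representable (c : seq nat) (n : nat) : Prop :=
  exists xs : seq nat, size xs = size c /\
    n = \sum_(i < size c) nth 0 c i * nth 0 xs i.

Definition candN (a : nat) (c : seq nat) (r : nat) (n : nat) : bool :=
  if excluded_middle_informative (n = r %[mod a] /\ representable c n)
  then true else false.

(* N_r for A = (a, c_1, ..., c_m): least nonnegative a0 = r (mod a)
   representable by c (default 0 if no such a0 exists; never happens when
   gcd(A) = 1). *)
Definition frobN (a : nat) (c : seq nat) (r : nat) : nat :=
  match excluded_middle_informative (exists n, candN a c r n) with
  | left H => @ex_minn (candN a c r) H
  | right _ => 0%N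
  end.

(* Main.v *)
Require Import Defs.
From HB Require Import structures.
From mathcomp Require Import all_boot all_order all_algebra.
From mathcomp Require Import zify.
From Stdlib Require Import ClassicalEpsilon.
Import Order.TTheory GRing.Theory Num.Theory.

Lemma mod_cancel a d u v : coprime a d -> d*u = d*v %[mod a] -> u = v %[mod a].
Proof.
move=> co.
wlog le: u v / v <= u.
  move=> W; case: (leqP v u) => [|/ltnW] h E; first exact: W.
  by symmetry; apply: W.
move=> /eqP; rewrite eqn_mod_dvd ?leq_mul2l ?le ?orbT // -mulnBr Gauss_dvdr //.
by rewrite -eqn_mod_dvd // => /eqP.
Qed.

Lemma candNP a c r n : candN a c r n <-> (n = r %[mod a] /\ representable c n).
Proof. by rewrite /candN; case: excluded_middle_informative. Qed.

Lemma repr2 A B n : representable [:: A; B] n <-> exists x y, n = A*x + B*y.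
Proof.
rewrite /representable; split.
  case=> xs [_ ->]; exists (nth 0 xs 0), (nth 0 xs 1).
  by rewrite !big_ord_recl big_ord0 /= addn0.
case=> x [y ->]; exists [:: x; y]; split => //.
by rewrite !big_ord_recl big_ord0 /= addn0.
Qed.

Lemma frobN_eq a c r v : candN a c r v -> (forall n, candN a c r n -> v <= n) ->
  frobN a c r = v.
Proof.
rewrite /frobN; case: excluded_middle_informative => [H|H] Hv Hmin; last first.
  by exfalso; apply: H; exists v.
case: ex_minnP => m Pm Hm; apply/eqP; rewrite eqn_leq Hm // ?andbT ?andTb.
exact: Hmin.
Qed.
Lemma ineq1 A B d h a k : A + d = h*a -> B = h*a + d -> k < a -> k*(2*h) <= A ->
  B*k <= A*(a-k).
Proof.
move=> HA HB ka hk. have H2 : k*(2*h)*a <= A*a by rewrite leq_mul2r hk orbT.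
have E : k*(2*h)*a = 2*k*(A+d) by rewrite HA; nia.
rewrite E in H2. subst B. rewrite -HA.
have Hs : A*a = A*k + A*(a-k) by rewrite -mulnDr subnKC // ltnW.
rewrite Hs in H2. clear E Hs; move: H2; move: (A*(a-k)) => Am H2; nia.
Qed.
Lemma ineq2 A B d h a k : A + d = h*a -> B = h*a + d -> k < a -> A < k*(2*h) ->
  A*(a-k) <= B*k.
Proof.
move=> HA HB ka hk. have H2 : A*a <= k*(2*h)*a by rewrite leq_mul2r ltnW ?orbT.
have E : k*(2*h)*a = 2*k*(A+d) by rewrite HA; nia.
rewrite E in H2. subst B. rewrite -HA.
have Hs : A*a = A*k + A*(a-k) by rewrite -mulnDr subnKC // ltnW.
rewrite Hs in H2. clear E Hs; move: H2; move: (A*(a-k)) => Am H2; nia.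
Qed.
Lemma frob_k A B d h a k : 0 < a -> 0 < h -> coprime a d -> A + d = h*a ->
  B = h*a + d -> k < a ->
  frobN a [:: A; B] (d*k %% a) = if k <= A %/ (2*h) then B*k else A*(a-k).
Proof.
move=> a0 h0 co HA HB ka.
set g := (if _ then _ else _).
have [gB gA] : g <= B*k /\ g <= A*(a-k).
  rewrite /g leq_divRL ?muln_gt0 //; case: ifP => hk.
    by split => //; apply: (ineq1 _ _ _ _ _ _ HA HB).
  by split => //; apply: (ineq2 _ _ _ _ _ _ HA HB) => //; rewrite ltnNge hk.
apply: frobN_eq.
  apply/candNP; split; last first.
    apply/repr2; rewrite /g; case: ifP => _.
      by exists 0, k; rewrite muln0.
    by exists (a-k), 0; rewrite muln0 addn0.
  rewrite modn_mod /g; case: ifP => _.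
    by rewrite HB mulnDl -mulnA (mulnC a) mulnA modnMDl.
  have E : d*a + A*(a-k) = h*(a-k)*a + d*k.
    have -> : d*a = d*(a-k) + d*k by rewrite -mulnDr subnK // ltnW.
    rewrite addnC addnA -mulnDl HA. nia.
  by rewrite -(modnMDl d (A*(a-k))) E modnMDl.
move=> n /candNP [Hn /repr2 [x [y En]]].
rewrite modn_mod in Hn.
have M : d*(k+x) = d*y %[mod a].
  rewrite mulnDr -modnDml -Hn modnDml.
  have -> : n + d*x = (h*x+h*y)*a + d*y by rewrite En HB -HA; nia.
  by rewrite modnMDl.
move/(mod_cancel _ _ _ _ co): M => M.
case: (leqP k y) => ky.
  apply: (leq_trans gB); rewrite En; apply: leq_trans (leq_addl _ _).
  by rewrite leq_mul2l ky orbT.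
have : a %| k + x - y.
  by rewrite -eqn_mod_dvd ?M // ltnW // (leq_trans ky) // leq_addr.
move/dvdn_leq; rewrite subn_gt0 (leq_trans ky) ?leq_addr // => /(_ isT) hx.
apply: (leq_trans gA); rewrite En; apply: leq_trans (leq_addr _ _).
rewrite leq_mul2l; apply/orP; right; lia.
Qed.
Lemma geom (F : fieldType) (y : F) n : (1 - y != 0)%R ->
  (\sum_(i < n) y ^+ i = (1 - y ^+ n) / (1 - y))%R.
Proof.
move=> hy.
have -> : (1 - y ^+ n = (1 - y) * \sum_(i < n) y ^+ i)%R.
  by rewrite -opprB subrX1 -mulNr opprB.
by rewrite mulrC mulKf.
Qed.

Theorem mainTheorem13 (a d h : nat) :
  (0 < a)%N -> (0 < d)%N -> (0 < h)%N -> coprime a d -> (1 < h * a - d)%N ->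
  let r1 := ((h * a - d) %/ (2 * h))%N in
  forall (F : fieldType) (x : F),
    (1 - x ^+ (h * a + d)%N != 0)%R -> (1 - x ^+ (h * a - d)%N != 0)%R ->
    (\sum_(r < a) x ^+ (frobN a [:: (h * a - d)%N; (h * a + d)%N] r)
     = (1 - x ^+ ((h * a + d) * (r1 + 1))%N) / (1 - x ^+ (h * a + d)%N)
       + x ^+ (h * a - d)%N * (1 - x ^+ ((h * a - d) * (a - r1 - 1))%N)
         / (1 - x ^+ (h * a - d)%N))%R.
Proof.
move=> a0 d0 h0 co hA r1 F x hB' hA'.
have HA : (h*a - d) + d = h*a by rewrite subnK //; lia.
move: hA hB' hA' HA; rewrite /r1; move: (h*a - d) => A hA hB' hA' HA.
move: hB'; set B := h*a + d => hB'.
have HB : B = h*a + d by [].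
set r := A %/ (2*h).
have ra : r < a.
  have := leq_trunc_div A (2*h); rewrite -/r => H.
  have : h*a <= 2*h*a by rewrite leq_mul2r leq_pmull ?orbT.
  nia.
pose hp (k : 'I_a) : 'I_a := Ordinal (ltn_pmod (d*k) a0).
have hinj : injective hp.
  move=> k1 k2 /(congr1 val) /= E; apply: val_inj => /=.
  have := mod_cancel _ _ _ _ co E.
  by rewrite !modn_small.
rewrite (reindex_inj hinj) /=.
rewrite (eq_bigr (fun k : 'I_a => x ^+ (if (k:nat) <= r then B*k else A*(a-k))%N)%R); last first.
  by move=> k _; rewrite (frob_k _ _ _ _ _ _ a0 h0 co HA HB).
rewrite -(big_mkord xpredT (fun k => x ^+ (if k <= r then B*k else A*(a-k))%N)%R).
rewrite (big_cat_nat (n := r.+1)) //=.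
congr (_ + _)%R.
  rewrite (eq_big_nat _ _ (F2 := fun i => (x ^+ B) ^+ i)%R); last first.
    by move=> i /andP [_ ]; rewrite ltnS => ->; rewrite exprM.
  by rewrite big_mkord geom // addn1 exprM.
rewrite -{1}(add0n r.+1) big_addn big_nat_rev /=.
rewrite (eq_big_nat _ _ (F2 := fun i => x ^+ A * (x ^+ A) ^+ i)%R); last first.
  move=> i /andP [_ hi].
  have -> : (0 + (a - r.+1) - i.+1 + r.+1 <= r) = false by apply/negbTE; lia.
  have -> : a - (0 + (a - r.+1) - i.+1 + r.+1) = i.+1 by lia.
  by rewrite -exprS -exprM.
rewrite big_mkord -mulr_sumr geom // -exprM mulrA.

by rewrite subnS subn1.
Qed.
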